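(* Let $f,g\in L^2(\mathbb{R})$ and write $V=V(f,g)=U+iW$ with $U,W$ real-valued. Assume that $V(x_0,\omega_0)=0$ and $\det J_V(x_0,\omega_0)\neq 0$, where \[ J_V(x_0,\omega_0)=\begin{pmatrix} U_x(x_0,\omega_0) & U_\omega(x_0,\omega_0)\\ W_x(x_0,\omega_0) & W_\omega(x_0,\omega_0)\end{pmatrix}, \] and let $\psi(x,\omega)=\arg V(x,\omega)$ denote a (local differentiable) phase of $V$. (i) If $V\in C^2(\mathbb{R}^2,\mathbb{R}^2)$, then \[ \lim_{x\to x_0}\frac{\partial\psi}{\partial\omega}(x,\omega_0)=\begin{cases}-\infty, & x\to x_0\text{ from the left},\\ +\infty, & x\to x_0\text{ from the right},\end{cases} \] if $\det J_V(x_0,\omega_0)>0$, and \[ \lim_{x\to x_0}\frac{\partial\psi}{\partial\omega}(x,\omega_0)=\begin{cases}+\infty, & x\to x_0\text{ from the left},\\ -\infty, & x\to x_0\text{ from the right},\end{cases} \] if $\det J_V(x_0,\omega_0)<0$. (ii) If $V\in C^3(\mathbb{R}^2,\mathbb{R}^2)$, then $\lim_{\omega\to\omega_0}\frac{\partial\psi}{\partial\omega}(x_0,\omega)=c'$ for some real number $c'\in\mathbb{R}$.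
   Context: The short-time Fourier transform is $V(f,g)(x,\omega)=\int_{\mathbb{R}} f(t)\overline{g(t-x)}e^{-2\pi i\omega t}\,dt$, regarded as a map $\mathbb{R}^2\to\mathbb{R}^2\cong\mathbb{C}$; $C^k$ refers to real differentiability in $(x,\omega)$ and subscripts denote partial derivatives. At points where $V\neq 0$, a differentiable phase $\psi$ with $V=|V|e^{i\psi}$ exists locally, is unique up to an additive constant in $2\pi\mathbb{Z}$, and its partial derivative is $\frac{\partial\psi}{\partial\omega}=\frac{U W_\omega-W U_\omega}{U^2+W^2}$ (independent of the choice of phase). *)

(* Defs.v *)
From HB Require Import structures.
From mathcomp Require Import all_boot all_order all_algebra.
From mathcomp Require Import all_classical all_reals all_analysis.
Set Implicit Arguments. Unset Strict Implicit. Unset Printing Implicit Defensive.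
Import Order.TTheory GRing.Theory Num.Theory.
Import numFieldNormedType.Exports.
Local Open Scope classical_set_scope.
Local Open Scope ring_scope.

Section Defs.
Variable R : realType.
Local Notation leb := (@lebesgue_measure R).

Definition L2r (h : R -> R) : Prop :=
  measurable_fun setT h /\ (\int[leb]_x ((h x) ^+ 2)%:E < +oo)%E.

(* a complex function f = fr + i fi is in L^2(R) iff its real and imaginary
   parts are *)
Definition L2c (fr fi : R -> R) : Prop := L2r fr /\ L2r fi.

(* Real and imaginary parts of the integrand f(t) conj(g(t-x)) e^{-2 pi i w t},
   with f = fr + i fi, g = gr + i gi. *)
Definition stft_integrand_re (fr fi gr gi : R -> R) (x w t : R) : R :=
  let P := fr t * gr (t - x) + fi t * gi (t - x) in
  let Q := fi t * gr (t - x) - fr t * gi (t - x) in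
  let th := 2 * pi * w * t in
  P * cos th + Q * sin th.

Definition stft_integrand_im (fr fi gr gi : R -> R) (x w t : R) : R :=
  let P := fr t * gr (t - x) + fi t * gi (t - x) in
  let Q := fi t * gr (t - x) - fr t * gi (t - x) in
  let th := 2 * pi * w * t in
  Q * cos th - P * sin th.

(* U = Re V(f,g), W = Im V(f,g), as functions of (x, omega) *)
Definition stftU (fr fi gr gi : R -> R) (p : R * R) : R :=
  Rintegral leb setT (stft_integrand_re fr fi gr gi p.1 p.2).
Definition stftW (fr fi gr gi : R -> R) (p : R * R) : R :=
  Rintegral leb setT (stft_integrand_im fr fi gr gi p.1 p.2).

Definition dx (F : R * R -> R) (p : R * R) : R := derive1 (fun s => F (s, p.2)) p.1.
Definition dw (F : R * R -> R) (p : R * R) : R := derive1 (fun s => F (p.1, s)) p.2.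

Fixpoint Ck (k : nat) (F : R * R -> R) : Prop :=
  match k with
  | 0 => continuous F
  | k'.+1 => continuous F /\
      (forall p : R * R, derivable (fun s => F (s, p.2)) p.1 1 /\
                         derivable (fun s => F (p.1, s)) p.2 1) /\
      Ck k' (dx F) /\ Ck k' (dw F)
  end.

Definition CkV (k : nat) (U W : R * R -> R) : Prop := Ck k U /\ Ck k W.

Definition detJ (U W : R * R -> R) (p : R * R) : R :=
  dx U p * dw W p - dw U p * dx W p.

(* d psi / d omega for a local phase psi of V = U + iW, given by the
   (phase-independent) formula (U W_w - W U_w)/(U^2 + W^2). *)
Definition dpsi_dw (U W : R * R -> R) (p : R * R) : R :=
  (U p * dw W p - W p * dw U p) / (U p ^+ 2 + W p ^+ 2).

End Defs.

(* Main.v *)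
Require Import Defs.
From HB Require Import structures.
From mathcomp Require Import all_boot all_order all_algebra.
From mathcomp Require Import all_classical all_reals all_analysis.
From mathcomp Require Import ring lra.
Import Order.TTheory GRing.Theory Num.Theory.
Import numFieldNormedType.Exports.
Local Open Scope classical_set_scope.
Local Open Scope ring_scope.
Section H.
Context {R : realType}.

Lemma dq (f : R -> R) a : derivable f a 1 ->
  (fun x => (f x - f a) / (x - a)) @ a^' --> derive1 f a.
Proof.
move=> df; rewrite derive1E.
have H : (fun h : R => h^-1 *: ((f \o shift a) (h *: 1) - f a)) @ 0^' --> 'D_1 f a := df.
apply/cvgrPdist_lt => e e0.
move/cvgrPdist_lt : H => /(_ e e0).
move=> /nbhs_ballP[d d0 Hd].
apply/nbhs_ballP; exists d => // y yad yna.
have := Hd (y - a).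
rewrite /ball /= in yad *.
rewrite sub0r normrN distrC => /(_ yad).
rewrite subr_eq0 => /(_ yna).
rewrite /shift /=.
have -> : (y - a)%:A + a = y :> R by rewrite -[_%:A]/((y - a) * 1) mulr1 subrK.
by rewrite mulrC.
Qed.

Lemma line2 (F : R * R -> R) x0 s0 : continuous F ->
  (fun s => F (x0, s)) @ s0 --> F (x0, s0).
Proof.
move=> cF.
apply: (@continuous2_cvg _ _ _ _ _ _ _ _ (fun a b => F (a, b))); [|exact: cvg_cst|exact: cvg_id].
have -> : (fun z : R * R => F (z.1, z.2)) = F by apply: funext => -[].
exact: cF.
Qed.

Lemma line1 (F : R * R -> R) w0 x1 : continuous F ->
  (fun x => F (x, w0)) @ x1 --> F (x1, w0).
Proof.
move=> cF.
apply: (@continuous2_cvg _ _ _ _ _ _ _ _ (fun a b => F (a, b))); [|exact: cvg_id|exact: cvg_cst].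
have -> : (fun z : R * R => F (z.1, z.2)) = F by apply: funext => -[].
exact: cF.
Qed.

Lemma dn_right {f : R -> R} {a l : R} : f @ a^' --> l -> f @ a^'+ --> l.
Proof.
move=> H P /H; rewrite !nbhs_simpl /= /within /=.
rewrite /dnbhs /at_right /within /=. move=> Ha. apply: (filterS _ Ha) => y Py ay; apply: Py.
by rewrite gt_eqF.
Qed.

Lemma dn_left {f : R -> R} {a l : R} : f @ a^' --> l -> f @ a^'- --> l.
Proof.
move=> H P /H; rewrite !nbhs_simpl /=.
rewrite /dnbhs /at_left /within /=. move=> Ha. apply: (filterS _ Ha) => y Py ay; apply: Py.
by rewrite lt_eqF.
Qed.

Lemma mulpy {T} {F : set_system T} {FF : Filter F} {Q g : T -> R} {q : R} :
  0 < q -> Q @ F --> q -> g @ F --> +oo ->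
  (fun x => Q x * g x) @ F --> +oo.
Proof.
move=> q0 HQ Hg; apply/cvgryPge => A.
have hq2 : q / 2 < q by rewrite ltr_pdivrMr // ltr_pMr // ltr1n.
have q20 : 0 < q / 2 by rewrite divr_gt0.
near=> x.
have h1 : q / 2 < Q x by near: x; exact: cvgr_gt HQ _ hq2.
have h2 : (2 / q) * `|A| <= g x by near: x; move/cvgryPge : Hg; apply.
have g0 : 0 <= g x by apply: le_trans h2; rewrite mulr_ge0 // ?divr_ge0 // ltW.
apply: (le_trans (ler_norm A)).
apply: (le_trans (y := (q / 2) * g x)); last by rewrite ler_wpM2r // ltW.
apply: (le_trans (y := (q / 2) * ((2 / q) * `|A|))); last by rewrite ler_wpM2l // ltW.
rewrite mulrA.
have -> : q / 2 * (2 / q) = 1 by field; rewrite gt_eqF.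
by rewrite mul1r.
Unshelve. all: by end_near. Qed.

Lemma inv_right (a : R) : (fun x => (x - a)^-1) @ a^'+ --> +oo.
Proof.
apply/cvgryPge => A.
have e0 : 0 < (`|A| + 1)^-1 by rewrite invr_gt0 ltr_wpDl.
near=> x.
have h1 : a < x by near: x; exact: nbhs_right_gt.
have h2 : x < a + (`|A| + 1)^-1 by near: x; apply: nbhs_right_lt; rewrite ltrDl.
have xa0 : 0 < x - a by rewrite subr_gt0.
apply: (le_trans (ler_norm A)); apply: ltW.
apply: (lt_le_trans (y := `|A| + 1)); first by rewrite ltrDl.
rewrite -[(x - a)^-1]mul1r ler_pdivlMr //.
have B0 : 0 < `|A| + 1 by rewrite ltr_wpDl.
have Be : (`|A| + 1) * (`|A| + 1)^-1 = 1 by rewrite mulfV // gt_eqF.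
by nra.
Unshelve. all: by end_near. Qed.

Lemma inv_left (a : R) : (fun x => (x - a)^-1) @ a^'- --> -oo.
Proof.
apply/cvgrNyPle => A.
have e0 : 0 < (`|A| + 1)^-1 by rewrite invr_gt0 ltr_wpDl.
near=> x.
have h1 : x < a by near: x; exact: nbhs_left_lt.
have h2 : a - (`|A| + 1)^-1 < x by near: x; apply: nbhs_left_gt; rewrite ltrBlDr ltrDl.
have xa0 : 0 < a - x by rewrite subr_gt0.
rewrite -opprB invrN lerNl.
apply: (le_trans (y := `|A|)); first by rewrite -normrN ler_norm.
apply: (le_trans (y := `|A| + 1)); first by rewrite lerDl.
rewrite -[(a - x)^-1]mul1r ler_pdivlMr //.
have B0 : 0 < `|A| + 1 by rewrite ltr_wpDl.
have Be : (`|A| + 1) * (`|A| + 1)^-1 = 1 by rewrite mulfV // gt_eqF.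
by nra.
Unshelve. all: by end_near. Qed.


Lemma nd {f : R -> R} {a l : R} : f @ a --> l -> f @ a^' --> l.
Proof. move=> H; apply: cvg_trans H; exact: (cvg_app f (cvg_within _)). Qed.

Lemma negy {T} {F : set_system T} {FF : Filter F} {f : T -> R} :
  f @ F --> +oo -> (fun x => - f x) @ F --> -oo.
Proof.
move=> /cvgryPge H; apply/cvgrNyPle => A.
by apply: filterS (H (- A)) => x; rewrite lerNl.
Qed.

Lemma negNy {T} {F : set_system T} {FF : Filter F} {f : T -> R} :
  f @ F --> -oo -> (fun x => - f x) @ F --> +oo.
Proof.
move=> /cvgrNyPle H; apply/cvgryPge => A.
by apply: filterS (H (- A)) => x; rewrite lerNr.
Qed.

Lemma mulpNy {T} {F : set_system T} {FF : Filter F} {Q g : T -> R} {q : R} :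
  0 < q -> Q @ F --> q -> g @ F --> -oo ->
  (fun x => Q x * g x) @ F --> -oo.
Proof.
move=> q0 HQ Hg.
have -> : (fun x => Q x * g x) = (fun x => - (Q x * - g x)).
  by apply: funext => x; rewrite mulrN opprK.
by apply: negy; apply: mulpy q0 HQ _; apply: negNy.
Qed.

Lemma alg1 (u w c d h : R) : h != 0 ->
  (u * d - w * c) / (u ^+ 2 + w ^+ 2) =
  ((u / h) * d - (w / h) * c) / ((u / h) ^+ 2 + (w / h) ^+ 2) * h^-1.
Proof.
move=> h0; have [m0|m0] := eqVneq (u ^+ 2 + w ^+ 2) 0.
  move/eqP: m0; rewrite paddr_eq0 ?sqr_ge0 // !sqrf_eq0 => /andP[/eqP -> /eqP ->].
  by rewrite !(mul0r, subrr, invr0).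
have -> : (u / h) ^+ 2 + (w / h) ^+ 2 = (u ^+ 2 + w ^+ 2) / h ^+ 2 by field.
field; apply/andP; split => //; by rewrite sqrf_eq0.
Qed.

Lemma neNy {T} {F : set_system T} {FF : Filter F} {f g : T -> R} :
  {near F, f =1 g} -> f @ F --> -oo -> g @ F --> -oo.
Proof.
move=> E /cvgrNyPle H; apply/cvgrNyPle => A.
near=> x.
have -> : g x = f x by near: x; apply: filterS E => y ->.
near: x; exact: H A.
Unshelve. all: by end_near. Qed.

Lemma nePy {T} {F : set_system T} {FF : Filter F} {f g : T -> R} :
  {near F, f =1 g} -> f @ F --> +oo -> g @ F --> +oo.
Proof.
move=> E /cvgryPge H; apply/cvgryPge => A.
near=> x.
have -> : g x = f x by near: x; apply: filterS E => y ->.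
near: x; exact: H A.
Unshelve. all: by end_near. Qed.

Lemma nearcvg {T} {F : set_system T} {FF : Filter F} {f g : T -> R} {l : R} :
  {near F, f =1 g} -> f @ F --> l -> g @ F --> l.
Proof. by move=> E H; apply: cvg_trans H; exact: near_eq_cvg E. Qed.

Lemma lhop2 (f df g dg : R -> R) (a l : R) :
  (forall x : R, is_derive x 1 f (df x)) -> (forall x : R, is_derive x 1 g (dg x)) ->
  f @ a --> 0 -> g @ a --> 0 -> (forall x, x != a -> dg x != 0) ->
  (fun x => df x / dg x) @ a^' --> l -> (fun x => f x / g x) @ a^' --> l.
Proof.
move=> fdf gdg f0 g0 dg0 H.
apply: (@cvg_at_right_left_dnbhs _ R^o).
  apply: (@lhopital_at_right R f df g dg a (a + 1) l) => //.
  - by rewrite ltrDl ltr01.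
  - exact: cvg_at_right_filter.
  - exact: cvg_at_right_filter.
  - by move=> x; rewrite in_itv /= => /andP[ax _]; apply: dg0; rewrite gt_eqF.
  - exact: dn_right.
apply: (@lhopital_at_left R f df g dg (a - 1) a l) => //.
- by rewrite ltrBlDr ltrDl ltr01.
- exact: cvg_at_left_filter.
- exact: cvg_at_left_filter.
- by move=> x; rewrite in_itv /= => /andP[_ xa]; apply: dg0; rewrite lt_eqF.
- exact: dn_left.
Qed.

Lemma alg2 (X Y Z V h : R) :
  (X * Z - Y * V) / (2 * h) = ((X / h) * Z - (Y / h) * V) / 2.
Proof.
have [->|h0] := eqVneq h 0; first by rewrite !(mulr0, mul0r, invr0, addr0, subrr).
by field.
Qed.

Lemma alg3 (u w h : R) :
  (u * u + w * w) / (h * h) = (u / h) * (u / h) + (w / h) * (w / h).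
Proof.
have [->|h0] := eqVneq h 0; first by rewrite !(mulr0, mul0r, invr0, addr0).
by field.
Qed.

Lemma alg4 (N D G : R) : G != 0 -> N / D = (N / G) / (D / G).
Proof.
move=> G0; have [->|D0] := eqVneq D 0; first by rewrite !(mulr0, mul0r, invr0).
by field; rewrite D0 G0.
Qed.

End H.

Theorem mainTheorem7 (R : realType) (fr fi gr gi : R -> R) (x0 w0 : R) :
  L2c fr fi -> L2c gr gi ->
  let U := stftU fr fi gr gi in
  let W := stftW fr fi gr gi in
  U (x0, w0) = 0 -> W (x0, w0) = 0 ->
  detJ U W (x0, w0) != 0 ->
  (CkV 2 U W ->
     (0 < detJ U W (x0, w0) ->
        dpsi_dw U W (x, w0) @[x --> x0^'-] --> -oo /\
        dpsi_dw U W (x, w0) @[x --> x0^'+] --> +oo) /\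
     (detJ U W (x0, w0) < 0 ->
        dpsi_dw U W (x, w0) @[x --> x0^'-] --> +oo /\
        dpsi_dw U W (x, w0) @[x --> x0^'+] --> -oo)) /\
  (CkV 3 U W ->
     exists c' : R, dpsi_dw U W (x0, w) @[w --> w0^'] --> c').
Proof.
move=> _ _ U W; clearbody U W; move=> U0 W0 det0; split.
  move=> [[cU [dU [_ [cwU _]]]] [cW [dW [_ [cwW _]]]]].
  set a := dx U (x0, w0); set b := dx W (x0, w0).
  set c := dw U (x0, w0); set d := dw W (x0, w0).
  have HA : (fun x => U (x, w0) / (x - x0)) @ x0^' --> a.
    have := @dq R _ _ (proj1 (dU (x0, w0))); rewrite /= U0.
    by under eq_fun do rewrite subr0.
  have HB : (fun x => W (x, w0) / (x - x0)) @ x0^' --> b.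
    have := @dq R _ _ (proj1 (dW (x0, w0))); rewrite /= W0.
    by under eq_fun do rewrite subr0.
  have Hc : (fun x => dw U (x, w0)) @ x0^' --> c by apply: nd; exact: line1.
  have Hd : (fun x => dw W (x, w0)) @ x0^' --> d by apply: nd; exact: line1.
  have detE : detJ U W (x0, w0) = a * d - b * c by rewrite /detJ (mulrC (dw U (x0, w0))).
  have m0 : a ^+ 2 + b ^+ 2 != 0.
    apply/negP; rewrite paddr_eq0 ?sqr_ge0 // !sqrf_eq0 => /andP[/eqP a0 /eqP b0].
    by move: det0; rewrite detE a0 b0 !mul0r subrr eqxx.
  pose Q x := (U (x, w0) / (x - x0) * dw W (x, w0) - W (x, w0) / (x - x0) * dw U (x, w0)) /
     ((U (x, w0) / (x - x0)) ^+ 2 + (W (x, w0) / (x - x0)) ^+ 2).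
  pose q := (a * d - b * c) / (a ^+ 2 + b ^+ 2).
  have mpos : 0 < a ^+ 2 + b ^+ 2 by rewrite lt_def m0 addr_ge0 // sqr_ge0.
  have HQ : Q @ x0^' --> q.
    pose FF := dnbhs_filter x0.
    have H1 := @cvgM _ _ _ FF _ _ _ _ HA Hd.
    have H2 := @cvgM _ _ _ FF _ _ _ _ HB Hc.
    have H3 := @cvgB _ _ _ _ FF _ _ _ _ H1 H2.
    have H4 := @cvgM _ _ _ FF _ _ _ _ HA HA.
    have H5 := @cvgM _ _ _ FF _ _ _ _ HB HB.
    have H6 := @cvgD _ _ _ _ FF _ _ _ _ H4 H5.
    rewrite !expr2 in m0.
    have H7 := @cvgV _ _ _ FF _ _ m0 H6.
    have H8 := @cvgM _ _ _ FF _ _ _ _ H3 H7.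
    rewrite /q !expr2.
    exact: H8.
  have dE : forall x, x != x0 -> dpsi_dw U W (x, w0) = Q x * (x - x0)^-1.
    by move=> x xn; rewrite /dpsi_dw /Q; apply: alg1; rewrite subr_eq0.
  have HQn : (fun x => - Q x) @ x0^' --> - q by apply: cvgN.
  split; rewrite detE => dpos.
    have qpos : 0 < q by rewrite /q divr_gt0.
    split.
      apply: (neNy _ (mulpNy qpos (dn_left HQ) (inv_left x0))).
      near=> x; rewrite dE ?lt_eqF //; near: x; exact: nbhs_left_lt.
    apply: (nePy _ (mulpy qpos (dn_right HQ) (inv_right x0))).
    near=> x; rewrite dE ?gt_eqF //; near: x; exact: nbhs_right_gt.
  have qpos : 0 < - q by rewrite oppr_gt0 /q ltr_pdivrMr // mul0r.
  split.
    apply: (nePy _ (mulpy qpos (dn_left HQn) (negNy (inv_left x0)))).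
    near=> x; rewrite dE ?lt_eqF ?mulrNN //; near: x; exact: nbhs_left_lt.
  apply: (neNy _ (mulpNy qpos (dn_right HQn) (negy (inv_right x0)))).
  near=> x; rewrite dE ?gt_eqF ?mulrNN //; near: x; exact: nbhs_right_gt.
move=> [[cU [dU [_ [cwU [dwU [_ [cwwU _]]]]]]] [cW [dW [_ [cwW [dwW [_ [cwwW _]]]]]]]].
pose c := dw U (x0, w0); pose d := dw W (x0, w0).
pose c2 := dw (dw U) (x0, w0); pose d2 := dw (dw W) (x0, w0).
have m0 : c * c + d * d != 0.
  apply/negP; rewrite -!expr2 paddr_eq0 ?sqr_ge0 // !sqrf_eq0 => /andP[/eqP c0 /eqP d0].
  by move: det0; rewrite /detJ -/c -/d c0 d0 mulr0 mul0r subrr eqxx.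
have HuA : (fun s => U (x0, s) / (s - w0)) @ w0^' --> c.
  have := @dq R _ _ (proj2 (dU (x0, w0))); rewrite /= U0.
  by under eq_fun do rewrite subr0.
have HwA : (fun s => W (x0, s) / (s - w0)) @ w0^' --> d.
  have := @dq R _ _ (proj2 (dW (x0, w0))); rewrite /= W0.
  by under eq_fun do rewrite subr0.
have Hc2 : (fun s => dw (dw U) (x0, s)) @ w0^' --> c2 by apply: nd; exact: line2.
have Hd2 : (fun s => dw (dw W) (x0, s)) @ w0^' --> d2 by apply: nd; exact: line2.
have du (s : R) : is_derive s 1 (fun t => U (x0, t)) (dw U (x0, s)).
  have H := derivableP (proj2 (dU (x0, s))); apply: is_derive_eq H _; by rewrite -derive1E.
have dww (s : R) : is_derive s 1 (fun t => W (x0, t)) (dw W (x0, s)).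
  have H := derivableP (proj2 (dW (x0, s))); apply: is_derive_eq H _; by rewrite -derive1E.
have du1 (s : R) : is_derive s 1 (fun t => dw U (x0, t)) (dw (dw U) (x0, s)).
  have H := derivableP (proj2 (dwU (x0, s))); apply: is_derive_eq H _; by rewrite -derive1E.
have dw1 (s : R) : is_derive s 1 (fun t => dw W (x0, t)) (dw (dw W) (x0, s)).
  have H := derivableP (proj2 (dwW (x0, s))); apply: is_derive_eq H _; by rewrite -derive1E.
have dN (s : R) : is_derive s 1
    (fun t => U (x0, t) * dw W (x0, t) - W (x0, t) * dw U (x0, t))
    (U (x0, s) * dw (dw W) (x0, s) - W (x0, s) * dw (dw U) (x0, s)).
  have H := is_deriveB (is_deriveM (du s) (dw1 s)) (is_deriveM (dww s) (du1 s)).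
  apply: is_derive_eq H _.
  rewrite /GRing.scale /=; ring.
have dG (s : R) : is_derive s 1 (fun t => (t - w0) * (t - w0)) (2 * (s - w0)).
  have H1 : is_derive s 1 (fun t : R => t - w0) 1.
    have H := is_deriveB (is_derive_id s 1) (is_derive_cst w0 s 1).
    apply: is_derive_eq H _. by rewrite subr0.
  have H := is_deriveM H1 H1.
  apply: is_derive_eq H _.
  rewrite /GRing.scale /=; ring.
pose FN := nbhs_filter w0.
pose FD := dnbhs_filter w0.
have Nc : (fun t => U (x0, t) * dw W (x0, t) - W (x0, t) * dw U (x0, t)) @ w0 --> 0.
  have H1 := @cvgM _ _ _ FN _ _ _ _ (line2 _ x0 w0 cU) (line2 _ x0 w0 cwW).
  have H2 := @cvgM _ _ _ FN _ _ _ _ (line2 _ x0 w0 cW) (line2 _ x0 w0 cwU).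
  have H3 := @cvgB _ _ _ _ FN _ _ _ _ H1 H2.
  rewrite U0 W0 !mul0r subrr in H3.
  exact: H3.
have Gc : (fun t => (t - w0) * (t - w0)) @ w0 --> 0.
  have H1 := @cvgB _ _ _ _ FN _ _ _ _ (@cvg_id _ (nbhs w0)) (@cvg_cst _ w0 _ _ FN).
  have H2 := @cvgM _ _ _ FN _ _ _ _ H1 H1.
  rewrite subrr mul0r in H2.
  exact: H2.
have HNG : (fun t => (U (x0, t) * dw W (x0, t) - W (x0, t) * dw U (x0, t)) /
    ((t - w0) * (t - w0))) @ w0^' --> (c * d2 - d * c2) / 2.
  apply: (lhop2 _ _ _ _ _ _ dN dG Nc Gc).
    by move=> x xw; rewrite mulf_neq0 // ?pnatr_eq0 // subr_eq0.
  under eq_fun do rewrite alg2.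
  have H1 := @cvgM _ _ _ FD _ _ _ _ HuA Hd2.
  have H2 := @cvgM _ _ _ FD _ _ _ _ HwA Hc2.
  have H3 := @cvgB _ _ _ _ FD _ _ _ _ H1 H2.
  have H4 := @cvgM _ _ _ FD _ _ _ _ H3 (@cvg_cst _ (2^-1 : R) _ _ FD).
  exact: H4.
have HDG : (fun t => (U (x0, t) * U (x0, t) + W (x0, t) * W (x0, t)) /
    ((t - w0) * (t - w0))) @ w0^' --> c * c + d * d.
  under eq_fun do rewrite alg3.
  have H1 := @cvgM _ _ _ FD _ _ _ _ HuA HuA.
  have H2 := @cvgM _ _ _ FD _ _ _ _ HwA HwA.
  have H3 := @cvgD _ _ _ _ FD _ _ _ _ H1 H2.
  exact: H3.
exists (((c * d2 - d * c2) / 2) / (c * c + d * d)).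
have H := @cvgM _ _ _ FD _ _ _ _ HNG (@cvgV _ _ _ FD _ _ m0 HDG).
apply: (nearcvg _ H).
near=> t.
have tw : t != w0 by near: t; exact: nbhs_dnbhs_neq.
rewrite /dpsi_dw /= !expr2 [RHS](alg4 _ _ ((t - w0) * (t - w0))) //.
by rewrite mulf_neq0 // subr_eq0.
Unshelve. all: by end_near.
Qed.
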